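(* Let $ABC$ be a triangle and let $O$ be a point in its interior. Let $\alpha=d_A/h_A$, $\beta=d_B/h_B$ and $\gamma=d_C/h_C$, where $d_A,d_B,d_C$ are the distances from $O$ to the lines $BC,CA,AB$ and $h_A,h_B,h_C$ are the corresponding altitudes of the triangle. Thus $\alpha+\beta+\gamma=1$. Let $D$ be the intersection of line $CO$ with side $AB$. For a point $t$ on segment $AD$, let $F(t)$ be the second intersection of the line $tO$ with the boundary of the triangle; this point lies on side $BC$. Then $$\alpha\,\frac{tA}{tB}+\gamma\,\frac{F(t)C}{F(t)B}=\beta,$$ where $XY$ denotes the length of the segment $XY$. *)

(* Defs.v *)
From Stdlib Require Import Reals.
Open Scope R_scope.

Definition point : Type := (R * R)%type.

Definition pdist (X Y : point) : R :=
  sqrt ((fst X - fst Y) ^ 2 + (snd X - snd Y) ^ 2).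

(* cross product of (Q - P) and (X - P): twice the signed area of PQX *)
Definition cross (P Q X : point) : R :=
  (fst Q - fst P) * (snd X - snd P) - (snd Q - snd P) * (fst X - fst P).

Definition collinear (P Q X : point) : Prop := cross P Q X = 0.

Definition dist_line (X P Q : point) : R := Rabs (cross P Q X) / pdist P Q.

Definition on_segment (X P Q : point) : Prop :=
  exists s : R, 0 <= s <= 1 /\
    X = ((1 - s) * fst P + s * fst Q, (1 - s) * snd P + s * snd Q).

Definition in_interior (O A B C : point) : Prop :=
  exists a b c : R, 0 < a /\ 0 < b /\ 0 < c /\ a + b + c = 1 /\
    O = (a * fst A + b * fst B + c * fst C, a * snd A + b * snd B + c * snd C).

(* Main.v *)
Require Import Defs.
From Stdlib Require Import Reals Lra Lia.
Open Scope R_scope.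

Lemma pdist_scale (X Y P Q : point) (k : R) :
  fst X - fst Y = k * (fst Q - fst P) -> snd X - snd Y = k * (snd Q - snd P) ->
  pdist X Y = Rabs k * pdist P Q.
Proof.
  intros H1 H2. unfold pdist. rewrite H1, H2.
  replace ((k * (fst Q - fst P)) ^ 2 + (k * (snd Q - snd P)) ^ 2)
    with (k ^ 2 * ((fst P - fst Q) ^ 2 + (snd P - snd Q) ^ 2)) by ring.
  rewrite sqrt_mult_alt by (apply pow2_ge_0).
  rewrite <- (pow2_abs k), sqrt_pow2 by apply Rabs_pos. reflexivity.
Qed.

Lemma pdist_eq0 (P Q : point) : pdist P Q = 0 -> fst P = fst Q /\ snd P = snd Q.
Proof.
  unfold pdist. intro H.
  pose proof (pow2_ge_0 (fst P - fst Q)); pose proof (pow2_ge_0 (snd P - snd Q)).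
  apply sqrt_eq_0 in H; [|lra].
  assert (E1 : (fst P - fst Q) ^ 2 = 0) by lra.
  assert (E2 : (snd P - snd Q) ^ 2 = 0) by lra.
  assert (Z : forall x, x ^ 2 = 0 -> x = 0) by (intros x Hx; destruct (Req_dec x 0); [auto | exfalso; apply (pow_nonzero x 2); auto]). apply Z in E1. apply Z in E2.
  split; lra.
Qed.

Theorem lemma7p1 (A B C O D t : point)
  (Hnondeg : cross A B C <> 0)
  (HO : in_interior O A B C)
  (HD : on_segment D A B) (HCOD : collinear C O D)
  (Ht : on_segment t A D) :
  let alpha := dist_line O B C / dist_line A B C in
  let beta := dist_line O C A / dist_line B C A in
  let gamma := dist_line O A B / dist_line C A B in
  (exists F : point, on_segment F B C /\ collinear t O F) /\
  (forall F : point, on_segment F B C -> collinear t O F ->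
     alpha * (pdist t A / pdist t B) + gamma * (pdist F C / pdist F B) = beta).
Proof.
  cbv zeta.
  destruct A as [x1 y1], B as [x2 y2], C as [x3 y3].
  destruct HO as (a & b & c & Ha & Hb & Hc & Habc & HOe). subst O.
  destruct HD as (s & Hs & HDe). subst D.
  destruct Ht as (r & Hr & Hte). subst t.
  unfold collinear in HCOD.
  assert (Ec : c = 1 - a - b) by lra.
  set (K := cross (x1, y1) (x2, y2) (x3, y3)) in *.
  assert (HK : cross (x1,y1) (x2,y2) (x3,y3) = K) by reflexivity.
  unfold cross in HK, HCOD; simpl in HK, HCOD.
  assert (Hs' : s * (a + b) = b).
  { assert (E : (s * (a+b) - b) * K = 0) by (rewrite <- HK; lazymatch type of HCOD with ?L = 0 => transitivity L; [rewrite ?Ec; ring | exact HCOD] end).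
    apply Rmult_integral in E. destruct E; [lra | contradiction]. }
  set (u := r * s).
  assert (Hu : 0 <= u /\ u * (a + b) <= b).
  { unfold u; split; nra. }
  assert (Hu1 : u < 1) by nra.
  assert (HAB : pdist (x1,y1) (x2,y2) <> 0).
  { intro H; apply pdist_eq0 in H; simpl in H; destruct H as [E1 E2].
    apply Hnondeg; rewrite <- HK; rewrite E1, E2; ring. }
  assert (HBC : pdist (x2,y2) (x3,y3) <> 0).
  { intro H; apply pdist_eq0 in H; simpl in H; destruct H as [E1 E2].
    apply Hnondeg; rewrite <- HK; rewrite E1, E2; ring. }
  assert (HCA : pdist (x3,y3) (x1,y1) <> 0).
  { intro H; apply pdist_eq0 in H; simpl in H; destruct H as [E1 E2].
    apply Hnondeg; rewrite <- HK; rewrite E1, E2; ring. }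
  assert (HKa : Rabs K <> 0) by (apply Rabs_no_R0; exact Hnondeg).
  assert (Halpha : dist_line (a * x1 + b * x2 + c * x3, a * y1 + b * y2 + c * y3)
     (x2, y2) (x3, y3) / dist_line (x1, y1) (x2, y2) (x3, y3) = a).
  { unfold dist_line.
    replace (cross (x2, y2) (x3, y3) (a * x1 + b * x2 + c * x3, a * y1 + b * y2 + c * y3))
      with (a * K) by (rewrite <- HK; unfold cross; simpl; rewrite ?Ec; ring).
    replace (cross (x2, y2) (x3, y3) (x1, y1)) with K by (rewrite <- HK; unfold cross; simpl; rewrite ?Ec; ring).
    rewrite Rabs_mult, (Rabs_pos_eq a) by lra. field. auto. }
  assert (Hbeta : dist_line (a * x1 + b * x2 + c * x3, a * y1 + b * y2 + c * y3)
     (x3, y3) (x1, y1) / dist_line (x2, y2) (x3, y3) (x1, y1) = b).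
  { unfold dist_line.
    replace (cross (x3, y3) (x1, y1) (a * x1 + b * x2 + c * x3, a * y1 + b * y2 + c * y3))
      with (b * K) by (rewrite <- HK; unfold cross; simpl; rewrite ?Ec; ring).
    replace (cross (x3, y3) (x1, y1) (x2, y2)) with K by (rewrite <- HK; unfold cross; simpl; rewrite ?Ec; ring).
    rewrite Rabs_mult, (Rabs_pos_eq b) by lra. field. auto. }
  assert (Hgamma : dist_line (a * x1 + b * x2 + c * x3, a * y1 + b * y2 + c * y3)
     (x1, y1) (x2, y2) / dist_line (x3, y3) (x1, y1) (x2, y2) = c).
  { unfold dist_line.
    replace (cross (x1, y1) (x2, y2) (a * x1 + b * x2 + c * x3, a * y1 + b * y2 + c * y3))
      with (c * K) by (rewrite <- HK; unfold cross; simpl; rewrite ?Ec; ring).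
    replace (cross (x1, y1) (x2, y2) (x3, y3)) with K by (rewrite <- HK; unfold cross; simpl; rewrite ?Ec; ring).
    rewrite Rabs_mult, (Rabs_pos_eq c) by lra. field. auto. }
  cbn [fst snd]. rewrite Halpha, Hbeta, Hgamma.
  set (T := ((1 - r) * x1 + r * ((1 - s) * x1 + s * x2),
             (1 - r) * y1 + r * ((1 - s) * y1 + s * y2))).
  assert (HT : T = ((1 - u) * x1 + u * x2, (1 - u) * y1 + u * y2)).
  { unfold T, u. f_equal; ring. }
  clearbody T. subst T.
  assert (Hcol : forall v, cross ((1 - u) * x1 + u * x2, (1 - u) * y1 + u * y2)
      (a * x1 + b * x2 + c * x3, a * y1 + b * y2 + c * y3)
      ((1 - v) * x2 + v * x3, (1 - v) * y2 + v * y3)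
      = ((1 - u) * (b * v - c * (1 - v)) - a * u * v) * K).
  { intro v. rewrite <- HK. unfold cross; simpl. rewrite ?Ec. ring. }
  split.
  - assert (Hden : b + c - u > 0) by nra.
    exists ((1 - c * (1 - u) / (b + c - u)) * x2 + c * (1 - u) / (b + c - u) * x3,
            (1 - c * (1 - u) / (b + c - u)) * y2 + c * (1 - u) / (b + c - u) * y3).
    split.
    + exists (c * (1 - u) / (b + c - u)). split; [split|reflexivity].
      * apply Rmult_le_pos; [nra | left; apply Rinv_0_lt_compat; lra].
      * apply Rmult_le_reg_r with (b + c - u); [lra|].
        unfold Rdiv. rewrite Rmult_assoc, Rinv_l by lra. nra.
    + unfold collinear. rewrite Hcol.
      replace ((1 - u) * (b * (c * (1 - u) / (b + c - u)) - c * (1 - c * (1 - u) / (b + c - u))) -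
               a * u * (c * (1 - u) / (b + c - u))) with 0.
      ring. field_simplify; [|lra]. 
      replace a with (1 - b - c) by lra. field_simplify; lra.
  - intros F [v [Hv HFe]] HcolF. subst F. cbn [fst snd]. unfold collinear in HcolF.
    rewrite Hcol in HcolF.
    apply Rmult_integral in HcolF. destruct HcolF as [E|E]; [|contradiction].
    assert (Hv0 : v <> 0). { intro. subst v. nra. }
    rewrite (pdist_scale ((1 - u) * x1 + u * x2, (1 - u) * y1 + u * y2) (x1,y1) (x1,y1) (x2,y2) u) by (cbn [fst snd]; ring).
    rewrite (pdist_scale ((1 - u) * x1 + u * x2, (1 - u) * y1 + u * y2) (x2,y2) (x1,y1) (x2,y2) (u - 1)) by (cbn [fst snd]; ring).
    rewrite (pdist_scale ((1 - v) * x2 + v * x3, (1 - v) * y2 + v * y3) (x3,y3) (x2,y2) (x3,y3) (v - 1)) by (cbn [fst snd]; ring).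
    rewrite (pdist_scale ((1 - v) * x2 + v * x3, (1 - v) * y2 + v * y3) (x2,y2) (x2,y2) (x3,y3) v) by (cbn [fst snd]; ring).
    rewrite (Rabs_pos_eq u) by lra.
    rewrite (Rabs_pos_eq v) by lra.
    rewrite (Rabs_left1 (u - 1)) by lra.
    rewrite (Rabs_left1 (v - 1)) by lra.
    replace (a * (u * pdist (x1, y1) (x2, y2) / (- (u - 1) * pdist (x1, y1) (x2, y2))) +
             c * (- (v - 1) * pdist (x2, y2) (x3, y3) / (v * pdist (x2, y2) (x3, y3))))
      with ((a * u * v + c * (1 - v) * (1 - u)) / ((1 - u) * v)) by (field; repeat split; lra).
    replace (a * u * v + c * (1 - v) * (1 - u)) with (b * ((1 - u) * v)) by lra.
    field. split; lra.
Qed.
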